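(* For any probability distributions $\mathbf{p},\mathbf{q}$ on $G_\Delta$ and any $\sigma>0$, $\mathrm{SIM}(\tilde H^\sigma_{\mathbf{p}},\tilde H^\sigma_{\mathbf{q}})\ge1-\frac{\sqrt{\mathrm{EMD}(\mathbf{p},\mathbf{q})}}{2\sigma}$.
   Context: $G_\Delta=\{(i/\Delta,j/\Delta):i,j\in\{0,\dots,\Delta-1\}\}$, $\tilde G_\Delta=\{(i/\Delta,j/\Delta):i,j\in\mathbb{Z}\}$. $\tilde H^\sigma_{\mathbf{p}}(a)=\sum_{a'\in G_\Delta}\frac1Z e^{-\|a-a'\|_2^2/(2\sigma^2)}\mathbf{p}(a')$ for $a\in\tilde G_\Delta$, $Z=\sum_{d\in\tilde G_\Delta}e^{-\|d\|_2^2/(2\sigma^2)}$. For probability distributions $P,Q$, the similarity metric is $\mathrm{SIM}(P,Q)=\sum_a\min(P(a),Q(a))=1-\mathrm{TV}(P,Q)$ with $\mathrm{TV}(P,Q)=\frac12\sum_a|P(a)-Q(a)|$. $\mathrm{EMD}(\mathbf{p},\mathbf{q})=\min_\gamma\sum_{x,y}\gamma(x,y)\|x-y\|_1$ over nonnegative couplings with marginals $\mathbf{p},\mathbf{q}$. *)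

(* Defs.v *)
From HB Require Import structures.
From mathcomp Require Import all_boot all_order all_algebra.
From mathcomp Require Import all_classical all_reals all_analysis.
Set Implicit Arguments. Unset Strict Implicit. Unset Printing Implicit Defensive.
Import Order.TTheory GRing.Theory Num.Theory.
Local Open Scope classical_set_scope.
Local Open Scope ring_scope.

(* The grid G_Delta = {(i/D, j/D) : i,j in {0..D-1}} is indexed by 'I_D * 'I_D;
   the infinite grid tilde G_Delta = {(i/D, j/D) : i,j in Z} by int * int. *)
Definition gidx (D : nat) := ('I_D * 'I_D)%type.

Definition gpt {R : realType} (D : nat) (x : gidx D) : R * R :=
  ((nat_of_ord x.1)%:R / D%:R, (nat_of_ord x.2)%:R / D%:R).

Definition lpt {R : realType} (D : nat) (a : int * int) : R * R :=
  (a.1%:~R / D%:R, a.2%:~R / D%:R).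

Definition sqdist {R : realType} (u v : R * R) : R :=
  (u.1 - v.1) ^+ 2 + (u.2 - v.2) ^+ 2.

Definition l1dist {R : realType} (u v : R * R) : R :=
  `|u.1 - v.1| + `|u.2 - v.2|.

Definition is_distr {R : realType} (D : nat) (p : {ffun gidx D -> R}) : Prop :=
  (forall x, 0 <= p x) /\ \sum_(x : gidx D) p x = 1.

(* Z = sum_{d in tilde G_Delta} exp(-||d||^2 / (2 sigma^2)) (a convergent
   series of positive terms; [fine] of its extended-real value) *)
Definition Zconst {R : realType} (D : nat) (sigma : R) : R :=
  fine (\esum_(d in [set: int * int])
          (expR (- sqdist (lpt D d) (0, 0) / (2 * sigma ^+ 2)))%:E).

Definition Htilde {R : realType} (D : nat) (sigma : R) (p : {ffun gidx D -> R})
    (a : int * int) : R :=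
  \sum_(a' : gidx D)
     (Zconst D sigma)^-1 * expR (- sqdist (lpt D a) (gpt a') / (2 * sigma ^+ 2))
       * p a'.

Definition SIM {R : realType} (P Q : int * int -> R) : \bar R :=
  \esum_(a in [set: int * int]) (Order.min (P a) (Q a))%:E.

Definition is_coupling {R : realType} (D : nat) (p q : {ffun gidx D -> R})
    (g : {ffun gidx D * gidx D -> R}) : Prop :=
  (forall xy, 0 <= g xy) /\
  (forall x, \sum_(y : gidx D) g (x, y) = p x) /\
  (forall y, \sum_(x : gidx D) g (x, y) = q y).

Definition coupling_cost {R : realType} (D : nat)
    (g : {ffun gidx D * gidx D -> R}) : R :=
  \sum_(xy : gidx D * gidx D) g xy * l1dist (gpt xy.1) (gpt xy.2).

(* EMD(p,q) = min over couplings of the cost (the minimum is attained, so it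
   equals the infimum) *)
Definition EMD {R : realType} (D : nat) (p q : {ffun gidx D -> R}) : R :=
  inf [set c | exists g, is_coupling p q g /\ c = coupling_cost g].

(* Main.v *)
Require Import Defs.
From HB Require Import structures.
From mathcomp Require Import all_boot all_order all_algebra.
From mathcomp Require Import all_classical all_reals all_analysis.
From mathcomp Require Import ring lra zify.
Import Order.TTheory GRing.Theory Num.Theory.
Local Open Scope classical_set_scope.
Local Open Scope ring_scope.
Section S.
Variable R : realType.

Lemma mvt_mono (f df : R -> R) : (forall x : R, is_derive x (1:R) f (df x)) ->
  (forall x, 0 <= df x) -> forall x y, x <= y -> f x <= f y.
Proof.
move=> hd hpos x y; rewrite le_eqVlt => /predU1P[->//|xy].
have [c _ e] := MVT xy (fun z _ => hd z) (derivable_within_continuous (fun z _ => @ex_derive _ _ _ _ _ _ _ (hd z))).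
rewrite -subr_ge0 e mulr_ge0 // subr_ge0 ltW //.
Qed.

Lemma mvt_sign (f df : R -> R) : (forall x : R, is_derive x (1:R) f (df x)) ->
  (forall x, 0 <= x * df x) -> forall L, f 0 <= f L.
Proof.
move=> hd hs L; case: (ltgtP L 0) => [L0|L0|->//].
  have [c] := MVT L0 (fun z _ => hd z) (derivable_within_continuous (fun z _ => @ex_derive _ _ _ _ _ _ _ (hd z))).
  rewrite in_itv /= => /andP[_ c0] e.
  have : df c <= 0.
    have := hs c; rewrite -(opprK c) mulNr oppr_ge0 => h.
    by rewrite -(pmulr_rle0 _ (_ : 0 < - c)) // oppr_gt0.
  move=> dc; rewrite -subr_le0 e mulr_le0_ge0 // subr_ge0 ltW //.
  have [c] := MVT L0 (fun z _ => hd z) (derivable_within_continuous (fun z _ => @ex_derive _ _ _ _ _ _ _ (hd z))).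
  rewrite in_itv /= => /andP[c0 _] e.
  have : 0 <= df c by rewrite -(pmulr_rge0 _ c0).
  move=> dc; rewrite -subr_ge0 e mulr_ge0 // subr_ge0 ltW //.
Qed.
Lemma H_ge0 (L : R) : 0 <= L * expR L - expR L + 1.
Proof.
have := expR_ge1Dx (- L); rewrite expRN => h.
have e0 := expR_gt0 L.
have : (1 - L) * expR L <= 1.
  have := ler_wpM2r (ltW e0) h; rewrite mulVf ?gt_eqF //.
lra.
Qed.

Lemma G_sign (x : R) : 0 <= x * (x * expR x + x - 2 * expR x + 2).
Proof.
pose G (x : R) := x * expR x + x - 2 * expR x + 2.
have hd : forall z : R, is_derive z (1:R) G (z * expR z - expR z + 1).
  move=> z; rewrite /G; apply: is_derive_eq.
  change (z * expR z + expR z * 1 + 1 - 2 * expR z + 0 = z * expR z - expR z + 1); ring.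
have G0 : G 0 = 0 by rewrite /G expR0; ring.
have mono := mvt_mono _ _ hd H_ge0; change (0 <= x * G x).
case: (lerP 0 x) => x0.
  by have := mono 0 x x0; rewrite G0 => h; rewrite mulr_ge0.

by have := mono x 0 (ltW x0); rewrite G0 => h; apply: mulr_le0 => //; exact: ltW.
Qed.

Lemma pinsker_pt (L : R) :
  3 * (expR L - 1) ^+ 2 <= (2 * expR L + 4) * (L * expR L - expR L + 1).
Proof.
pose F (x : R) := (2 * expR x + 4) * (x * expR x - expR x + 1) - 3 * (expR x - 1) ^+ 2.
have hd : forall z : R, is_derive z (1:R) F (4 * expR z * (z * expR z + z - 2 * expR z + 2)).
  move=> z; rewrite /F; apply: is_derive_eq.
  have sc : forall a b : R, a *: b = a * b by [].
  rewrite /GRing.scale /=; ring.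
have F0 : F 0 = 0 by rewrite /F expR0; ring.
have hs : forall x : R, 0 <= x * (4 * expR x * (x * expR x + x - 2 * expR x + 2)).
  move=> x; rewrite mulrCA; apply: mulr_ge0; last exact: G_sign.
  by rewrite mulr_ge0 // ltW // expR_gt0.
by have := mvt_sign _ _ hd hs L; rewrite F0 /F subr_ge0.
Qed.
End S.
Arguments H_ge0 {R}.
Arguments pinsker_pt {R}.

Section T.
Variable R : realType.
Lemma amgm_abs (d X Y : R) : 0 <= X -> 0 <= Y -> d ^+ 2 <= X * Y -> `|d| <= (X + Y) / 2.
Proof.
move=> X0 Y0 h.
have hz : X * Y <= ((X + Y) / 2) ^+ 2.
  have : 0 <= (X - Y) ^+ 2 by apply: sqr_ge0.
  lra.
have z0 : 0 <= (X + Y) / 2 by lra.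
set z := (X + Y) / 2 in hz z0 *.
have hd : `|d| ^+ 2 <= z ^+ 2 by rewrite real_normK ?num_real //; lra.
rewrite leNgt; apply/negP => hlt.
have n0 := normr_ge0 d.
nra.
Qed.
Lemma min_formula (a b : R) : Order.min a b = (a + b - `|a - b|) / 2.
Proof.
rewrite /Order.min; case: ifPn => ab.
  rewrite ler0_norm ?subr_le0 ?ltW //; lra.
rewrite -leNgt in ab.
rewrite ger0_norm ?subr_ge0 //; lra.
Qed.
End T.

Section Box.
Variable R : realType.

Definition box (N : nat) (c : int * int) : set (int * int) :=
  [set a | (c.1 - N%:Z <= a.1 <= c.1 + N%:Z) && (c.2 - N%:Z <= a.2 <= c.2 + N%:Z)].
Definition bx N (c : int * int) (ij : 'I_N.*2.+1 * 'I_N.*2.+1) : int * int :=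
  (c.1 + (ij.1 : nat)%:Z - N%:Z, c.2 + (ij.2 : nat)%:Z - N%:Z).
Definition bsum N c (f : int * int -> R) :=
  \sum_(ij : 'I_N.*2.+1 * 'I_N.*2.+1) f (bx N c ij).

Lemma bx_inj N c : injective (bx N c).
Proof.
move=> [i j] [k l] [] /= h1 h2.
have e1 : (i : nat) = k by lia.
have e2 : (j : nat) = l by lia.
by congr pair; apply: val_inj.
Qed.

Lemma box_img N c : bx N c @` setT = box N c.
Proof.
apply/seteqP; split.
  move=> _ [[i j] _ <-]; rewrite /box /bx /=.
  have := ltn_ord i; have := ltn_ord j; lia.
move=> [a1 a2]; rewrite /box /= => /andP[/andP[h1 h2] /andP[h3 h4]].
have hi : (absz (a1 - c.1 + N%:Z)%R < N.*2.+1)%N by lia.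
have hj : (absz (a2 - c.2 + N%:Z)%R < N.*2.+1)%N by lia.
exists (Ordinal hi, Ordinal hj) => //.
rewrite /bx /=; congr pair; lia.
Qed.

Lemma esum_finT (T : finType) (f : T -> \bar R) : (forall i, 0 <= f i)%E ->
  \esum_(i in [set: T]) f i = \sum_(i : T) f i.
Proof.
move=> f0; rewrite esum_fset //; last exact: finite_finset.
rewrite (fsbigE (enum T)) ?enum_uniq //.
  by rewrite big_enum_cond /=; apply: eq_bigl => i; rewrite in_setT.
by move=> i _; rewrite mem_enum.
Qed.

Lemma bsum_esum N c f : (forall a, 0 <= f a) ->
  (bsum N c f)%:E = \esum_(a in box N c) (f a)%:E.
Proof.
move=> f0; rewrite -box_img esum_image; last by move=> x y _ _; apply: bx_inj.
rewrite esum_finT // /bsum.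
by rewrite sumEFin.
by move=> i; rewrite lee_fin.
Qed.

Lemma esum_sub (T : choiceType) (A B : set T) (f : T -> \bar R) :
  A `<=` B -> (forall x, B x -> 0 <= f x)%E ->
  (\esum_(x in A) f x <= \esum_(x in B) f x)%E.
Proof.
move=> AB f0; rewrite esum_mkcond [X in (_ <= X)%E]esum_mkcond.
apply: le_esum => x _; case: ifPn => xA.
  by rewrite ifT // inE; apply: AB; rewrite -inE.
by case: ifPn => // /[!inE] /f0.
Qed.

Lemma box_sub N M (c d : int * int) :
  d.1 - M%:Z <= c.1 - N%:Z -> c.1 + N%:Z <= d.1 + M%:Z ->
  d.2 - M%:Z <= c.2 - N%:Z -> c.2 + N%:Z <= d.2 + M%:Z ->
  box N c `<=` box M d.
Proof.
move=> h1 h2 h3 h4 [a1 a2]; rewrite /box /= => /andP[/andP[? ?] /andP[? ?]].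
lia.
Qed.

End Box.
Arguments bsum {R} N c f.

Lemma fin_in_box (F : set (int * int)) : finite_set F -> exists N, F `<=` box N (0, 0).
Proof.
move=> /finite_seqP [s ->].
exists (\max_(a <- s) (absz a.1 + absz a.2))%N => a /= ias.
have := @leq_bigmax_seq _ s xpredT (fun a : int * int => (absz a.1 + absz a.2)%N) a ias isT.
rewrite /box /=; set M := (\max_(_ <- _) _)%N => h.
lia.
Qed.

Lemma bsum_shift (R : realType) N (c : int * int) (f : int * int -> R) :
  bsum N c f = bsum N (0, 0) (fun b => f (c.1 + b.1, c.2 + b.2)).
Proof.
apply: eq_bigr => ij _; congr f; rewrite /bx /=; congr pair; lia.
Qed.

Lemma bsum_sym (R : realType) N (f : int * int -> R) :
  bsum N (0, 0) f = bsum N (0, 0) (fun b => f (- b.1, - b.2)).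
Proof.
rewrite /bsum (reindex_inj (h := fun ij : 'I_N.*2.+1 * 'I_N.*2.+1 => (rev_ord ij.1, rev_ord ij.2))).
  apply: eq_bigr => [[i j]] _; congr f; rewrite /bx /=.
  move: (ltn_ord i) (ltn_ord j) => hi hj; congr pair; lia.
move=> [i j] [k l] [] h1 h2; move: (ltn_ord i) (ltn_ord j) (ltn_ord k) (ltn_ord l) => ? ? ? ?.
congr pair; apply: val_inj => /=; lia.
Qed.

Lemma bsumD (R : realType) N c (F G : int * int -> R) :
  bsum N c (fun b => F b + G b) = bsum N c F + bsum N c G.
Proof. exact: big_split. Qed.

Lemma bsumZl (R : realType) N c (k : R) (F : int * int -> R) :
  bsum N c (fun b => k * F b) = k * bsum N c F.
Proof. by rewrite /bsum mulr_sumr. Qed.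

Lemma bsumZr (R : realType) N c (k : R) (F : int * int -> R) :
  bsum N c (fun b => F b * k) = bsum N c F * k.
Proof. by rewrite /bsum mulr_suml. Qed.

Lemma ler_bsum (R : realType) N c (F G : int * int -> R) :
  (forall b, F b <= G b) -> bsum N c F <= bsum N c G.
Proof. by move=> h; apply: ler_sum => i _; apply: h. Qed.
Arguments ler_bsum {R N c F G}.

Lemma eq_bsum (R : realType) N c (F G : int * int -> R) :
  (forall b, F b = G b) -> bsum N c F = bsum N c G.
Proof. by move=> h; apply: eq_bigr => i _; apply: h. Qed.

Lemma frac_lb (R : realType) (Z X e : R) : 1 <= Z -> 0 <= e -> Z - e <= X -> 1 - e <= X / Z.
Proof.
move=> Z1 e0 h; have Z0 : 0 < Z by lra.
rewrite ler_pdivlMr //; nra.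
Qed.

Lemma frac_ub (R : realType) (Z X : R) : 0 < Z -> X <= Z -> X / Z <= 1.
Proof. by move=> Z0 h; rewrite ler_pdivrMr // mul1r. Qed.

Section Kernel.
Variables (R : realType) (D : nat) (sigma : R).
Hypotheses (D0 : (0 < D)%N) (s0 : 0 < sigma).

Definition gk (a : int * int) : R :=
  expR (- sqdist (lpt D a) (0, 0) / (2 * sigma ^+ 2)).

Lemma gk_gt0 a : 0 < gk a. Proof. exact: expR_gt0. Qed.

Lemma gk00 : gk (0, 0) = 1.
Proof. by rewrite /gk /sqdist /lpt /= !mul0r !subr0 expr2 !mul0r addr0 oppr0 mul0r expR0. Qed.

Lemma gk_sym (a : int * int) : gk (- a.1, - a.2) = gk a.
Proof. by rewrite /gk /sqdist /lpt /= !mulrNz !mulNr !subr0 !sqrrN. Qed.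

Lemma sqd_shift (a : int * int) (x : gidx D) :
  (sqdist (lpt D a) (gpt x) : R) =
  sqdist (lpt D (a.1 - (nat_of_ord x.1)%:Z, a.2 - (nat_of_ord x.2)%:Z)) (0, 0).
Proof.
by rewrite /sqdist /lpt /gpt /= !subr0 !intrB -!pmulrn !mulrBl.
Qed.

Definition hk (n : int) : R := expR (- (n%:~R / D%:R) ^+ 2 / (2 * sigma ^+ 2)).

Lemma gk_hk (a : int * int) : gk a = hk a.1 * hk a.2.
Proof. by rewrite /gk /hk -expRD /sqdist /lpt /= !subr0; congr expR; rewrite !mulNr -opprD mulrDl. Qed.

Definition rr : R := expR (- (D%:R ^+ 2 * (2 * sigma ^+ 2))^-1).

Lemma rr_gt0 : 0 < rr. Proof. exact: expR_gt0. Qed.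
Lemma rr_lt1 : rr < 1.
Proof.
have hp : 0 < (D%:R ^+ 2 * (2 * sigma ^+ 2) : R)^-1.
  by rewrite invr_gt0 mulr_gt0 ?exprn_gt0 ?ltr0n // mulr_gt0 // exprn_gt0.
by rewrite /rr -[X in _ < X]expR0 ltr_expR oppr_lt0.
Qed.

Lemma hk_le n : hk n <= rr ^+ (absz n).
Proof.
rewrite /rr -expRM_natl ler_expR mulrN /hk mulNr lerN2.
have key : ((absz n)%:R : R) <= n%:~R ^+ 2.
  change ((((absz n)%:Z)%:~R : R) <= n%:~R ^+ 2).
  rewrite -rmorphXn /= ler_int expr2; nia.
rewrite expr_div_n invfM mulrA.
apply: ler_wpM2r; first by rewrite invr_ge0 mulr_ge0 // exprn_ge0 // ltW.
apply: ler_wpM2r => //; by rewrite invr_ge0 exprn_ge0.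
Qed.


Lemma geom_le (r : R) n : 0 <= r -> r < 1 -> \sum_(i < n) r ^+ i <= (1 - r)^-1.
Proof.
move=> r0 r1; have e := subrX1 r n.
have h : (\sum_(i < n) r ^+ i) * (1 - r) = 1 - r ^+ n.
  by rewrite mulrC -opprB mulNr -e opprB.
have p : 0 < 1 - r by rewrite subr_gt0.
rewrite -(ler_pM2r p) mulVf ?gt_eqF // h.
by rewrite lerBlDr lerDl exprn_ge0.
Qed.

Lemma S1_le N : \sum_(i < N.*2.+1) rr ^+ (absz ((i : nat)%:Z - N%:Z)) <= 2 * (1 - rr)^-1.
Proof.
have r0 := ltW rr_gt0; have r1 := ltW rr_lt1.
rewrite -(big_mkord xpredT (fun i : nat => rr ^+ (absz (i%:Z - N%:Z)))).
rewrite (big_cat_nat (n := N)) /=; [|lia|lia].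
rewrite mulr2n mulrDl mul1r; apply: lerD.
  rewrite big_nat_rev /= add0n.
  apply: (le_trans (y := \sum_(0 <= i < N) rr ^+ i)).
    apply: ler_sum_nat => i /andP[_ iN]; apply: ler_wiXn2l => //; lia.
  by rewrite big_mkord; apply: geom_le r0 (rr_lt1).
rewrite (big_addn 0 _ N).
apply: (le_trans (y := \sum_(0 <= i < N.*2.+1 - N) rr ^+ i)).
  by apply: ler_sum_nat => i _; apply: ler_wiXn2l => //; lia.
by rewrite big_mkord; apply: geom_le r0 (rr_lt1).
Qed.

Definition K N := bsum N (0, 0) gk.

Lemma K_le N : K N <= (2 * (1 - rr)^-1) ^+ 2.
Proof.
rewrite /K /bsum expr2.
have hS : \sum_(i < N.*2.+1) hk (0 + (i : nat)%:Z - N%:Z) <= 2 * (1 - rr)^-1.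
  apply: le_trans (S1_le N); apply: ler_sum => i _; rewrite add0r; exact: hk_le.
have hS0 : 0 <= \sum_(i < N.*2.+1) hk (0 + (i : nat)%:Z - N%:Z).
  by apply: sumr_ge0 => i _; apply: ltW; apply: expR_gt0.
apply: le_trans (ler_pM hS0 hS0 hS hS).
rewrite mulr_suml; under [leRHS]eq_bigr do rewrite mulr_sumr.
rewrite pair_bigA /=; apply: ler_sum => ij _; by rewrite gk_hk.
Qed.

Definition Eg := \esum_(d in [set: int * int]) (gk d)%:E.

Lemma Eg_ge N : ((K N)%:E <= Eg)%E.
Proof.
rewrite /K bsum_esum; last by move=> a; apply: ltW; apply: gk_gt0.
by apply: esum_sub => // x _; rewrite lee_fin ltW // gk_gt0.
Qed.

Lemma Eg_le : (Eg <= ((2 * (1 - rr)^-1) ^+ 2)%:E)%E.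
Proof.
apply: ge_ereal_sup => _ [X [finX _] <-].
have [N XN] := fin_in_box X finX.
rewrite -esum_fset //; last by move=> i _; rewrite lee_fin ltW // gk_gt0.
apply: le_trans (_ : (K N)%:E <= _)%E; last by rewrite lee_fin K_le.
rewrite /K bsum_esum; last by move=> a; apply: ltW; apply: gk_gt0.
by apply: esum_sub => // x _; rewrite lee_fin ltW // gk_gt0.
Qed.


Lemma Eg_fin : Eg \is a fin_num.
Proof.
rewrite ge0_fin_numE; last by apply: esum_ge0 => x _; rewrite lee_fin ltW // gk_gt0.
exact: le_lt_trans Eg_le (ltey _).
Qed.

Lemma Z_E : (Zconst D sigma)%:E = Eg.
Proof. by rewrite /Zconst fineK //; exact: Eg_fin. Qed.

Lemma K_le_Z N : K N <= Zconst D sigma.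
Proof. by rewrite -lee_fin Z_E Eg_ge. Qed.

Lemma K0 : K 0 = 1.
Proof.
rewrite /K /bsum (big_pred1 (ord0, ord0)); last by case=> [[[|//] ?] [[|//] ?]].
by rewrite /bx /= !addr0 gk00.
Qed.

Lemma Z_ge1 : 1 <= Zconst D sigma.
Proof. by rewrite -K0 K_le_Z. Qed.

Lemma K_mono N M : (N <= M)%N -> K N <= K M.
Proof.
move=> NM; rewrite -lee_fin /K !bsum_esum; try by move=> a; apply: ltW; apply: gk_gt0.
apply: esum_sub; last by move=> x _; rewrite lee_fin ltW // gk_gt0.
apply: box_sub => /=; lia.
Qed.

Lemma K_approx e : 0 < e -> exists N, Zconst D sigma - e <= K N.
Proof.
move=> e0.
have : ((Zconst D sigma - e)%:E < Eg)%E by rewrite -Z_E lte_fin ltrBlDr ltrDl.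
move=> /ereal_sup_gt [_ [X [finX _] <-]] lt.
have [N XN] := fin_in_box X finX.
exists N; rewrite -lee_fin; apply: (le_trans (ltW lt)).
rewrite -esum_fset //; last by move=> i _; rewrite lee_fin ltW // gk_gt0.
rewrite /K bsum_esum; last by move=> a; apply: ltW; apply: gk_gt0.
by apply: esum_sub => // x _; rewrite lee_fin ltW // gk_gt0.
Qed.

Definition sq (b : int * int) : R := sqdist (lpt D b) (0, 0).
Definition c2 : R := 2 * sigma ^+ 2.
Lemma c2_gt0 : 0 < c2.
Proof. by rewrite /c2 mulr_gt0 // exprn_gt0. Qed.

Lemma sq_ge0 v : 0 <= sq v.
Proof. by rewrite /sq /sqdist addr_ge0 // sqr_ge0. Qed.

Definition lin (b v : int * int) : R := (lpt D b).1 * (lpt D v).1 + (lpt D b).2 * (lpt D v).2.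

Lemma sq_add (b v : int * int) :
  sq (b.1 + v.1, b.2 + v.2) - sq b = 2 * lin b v + sq v.
Proof. rewrite /sq /lin /sqdist /lpt /= !subr0 !intrD !mulrDl; ring. Qed.

Lemma lin_sym (b v : int * int) : lin (- b.1, - b.2) v = - lin b v.
Proof. rewrite /lin /lpt /= !mulrNz !mulNr; ring. Qed.

Lemma pair_bound M (v : int * int) e : 0 < e -> Zconst D sigma - e <= K M ->
  - (D%:Z) <= v.1 <= D%:Z -> - (D%:Z) <= v.2 <= D%:Z ->
  1 - e - Num.sqrt ((sq v / c2 + e) / 2) <=
  bsum (M + D) (0, 0) (fun b => Order.min (gk b / Zconst D sigma)
                                 (gk (b.1 + v.1, b.2 + v.2) / Zconst D sigma)).
Proof.
move=> e0 hM /andP[v1l v1u] /andP[v2l v2u].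
set Z := Zconst D sigma; set N := (M + D)%N.
have Z1 : 1 <= Z := Z_ge1.
have Z0 : 0 < Z by lra.
set u := fun b => gk b / Z.
set w := fun b : int * int => gk (b.1 + v.1, b.2 + v.2) / Z.
set L := fun b : int * int => (sq (b.1 + v.1, b.2 + v.2) - sq b) / c2.
set A := bsum N (0, 0) u; set B := bsum N (0, 0) w.
set C := bsum N (0, 0) (fun b => u b * L b).
have hA : 1 - e <= A /\ A <= 1.
  have -> : A = K N / Z by rewrite /A /u bsumZr.
  split; last exact: frac_ub (K_le_Z N).
  apply: frac_lb => //; first exact: ltW.
  apply: le_trans hM _; apply: K_mono; rewrite /N; lia.
have hB : 1 - e <= B /\ B <= 1.
  have -> : B = bsum N v gk / Z.
    have -> : bsum N v gk = bsum N (0, 0) (fun b => gk (b.1 + v.1, b.2 + v.2)).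
      by rewrite bsum_shift; apply: eq_bsum => b; rewrite [v.1 + _]addrC [v.2 + _]addrC.
    by rewrite /B /w bsumZr.
  have gk0 : forall a, 0 <= gk a by move=> a; apply: ltW; apply: gk_gt0.
  split.
    apply: frac_lb => //; first exact: ltW.
    apply: le_trans hM _; rewrite -lee_fin /K !bsum_esum //.
    apply: esum_sub; last by move=> x _; rewrite lee_fin.
    apply: box_sub => /=; rewrite /N; lia.
  apply: frac_ub => //; rewrite -lee_fin bsum_esum // Z_E.
  by apply: esum_sub => // x _; rewrite lee_fin.
have uw : forall b, u b = w b * expR (L b).
  move=> b; rewrite /u /w /L mulrAC; congr (_ / _).
  rewrite /gk -expRD; congr expR; rewrite -/(sq _) -/(sq _) -/c2; field.
  by apply: lt0r_neq0; exact: c2_gt0.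
have w0 : forall b, 0 <= w b.
  by move=> b; rewrite /w divr_ge0 ?ltW // gk_gt0.
set m := fun b => (2 * u b + 4 * w b) / 3.
set T := fun b => u b * L b - u b + w b.
have T0 : forall b, 0 <= T b.
  move=> b; rewrite /T uw.
  have := H_ge0 (L b) => h.
  have -> : w b * expR (L b) * L b - w b * expR (L b) + w b =
            w b * (L b * expR (L b) - expR (L b) + 1) by ring.
  exact: mulr_ge0.
have mT : forall b, (u b - w b) ^+ 2 <= m b * T b.
  move=> b; rewrite /m /T uw.
  have h := pinsker_pt (L b).
  have hw2 : 0 <= w b ^+ 2 / 3 by rewrite divr_ge0 // sqr_ge0.
  have := ler_wpM2l hw2 h.
  set E := expR (L b).
  have -> : (w b * E - w b) ^+ 2 = w b ^+ 2 / 3 * (3 * (E - 1) ^+ 2) by field.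
  suff -> : (2 * (w b * E) + 4 * w b) / 3 * (w b * E * L b - w b * E + w b) =
    w b ^+ 2 / 3 * ((2 * E + 4) * (L b * E - E + 1)) by [].
  by field.
have u0 : forall b, 0 <= u b by move=> b; rewrite /u divr_ge0 ?ltW // gk_gt0.
set Bb := sq v / c2 + e.
have Bb0 : 0 < Bb.
  by rewrite /Bb ltr_wpDl // divr_ge0 ?sq_ge0 // ltW // c2_gt0.
set la := Num.sqrt (Bb / 2).
have la0 : 0 < la by rewrite /la sqrtr_gt0 divr_gt0.
have la2 : la ^+ 2 = Bb / 2 by rewrite /la sqr_sqrtr // divr_ge0 // ltW.
have pw : forall b, `|u b - w b| <= (la * m b + T b / la) / 2.
  move=> b; apply: amgm_abs.
  - apply: mulr_ge0; first exact: ltW.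
    by rewrite /m divr_ge0 // addr_ge0 // mulr_ge0.
  - by rewrite divr_ge0 // ltW.
  - have -> : la * m b * (T b / la) = m b * T b by field; apply: lt0r_neq0.
    exact: mT.
have sumabs : bsum N (0, 0) (fun b => `|u b - w b|) <=
    (la * ((2 * A + 4 * B) / 3) + (C - A + B) / la) / 2.
  apply: le_trans (ler_bsum pw) _.
  rewrite le_eqVlt; apply/orP; left; apply/eqP.
  have -> : bsum N (0, 0) (fun b => (la * m b + T b / la) / 2) =
      bsum N (0, 0) (fun b => ((la / 3 - la^-1 / 2) * u b + (2 * la / 3 + la^-1 / 2) * w b)
                             + la^-1 / 2 * (u b * L b)).
    by apply: eq_bsum => b; rewrite /m /T; field; apply: lt0r_neq0.
  rewrite !bsumD !bsumZl -/A -/B -/C; field; apply: lt0r_neq0 => //.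
have hS : bsum N (0, 0) (fun b => u b * lin b v) = 0.
  set S := bsum N (0, 0) (fun b => u b * lin b v).
  have : S = - S.
    rewrite {1}/S bsum_sym /S /bsum -sumrN; apply: eq_bigr => i _.
    rewrite lin_sym /u gk_sym; ring.
  lra.
have hC : C = sq v / c2 * A.
  have -> : C = bsum N (0, 0) (fun b => (2 / c2) * (u b * lin b v) + sq v / c2 * u b).
    apply: eq_bsum => b; rewrite /L sq_add; field.
    by apply: lt0r_neq0; exact: c2_gt0.
  by rewrite bsumD !bsumZl hS mulr0 add0r.
have sumabs2 : bsum N (0, 0) (fun b => `|u b - w b|) <= 2 * la.
  apply: le_trans sumabs _.
  have h1 : la * ((2 * A + 4 * B) / 3) <= la * 2.
    apply: ler_wpM2l; [exact: ltW | lra].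
  have sv0 : 0 <= sq v / c2 by rewrite divr_ge0 ?sq_ge0 // ltW // c2_gt0.
  have h2 : (C - A + B) / la <= Bb / la.
    apply: ler_wpM2r; first by rewrite invr_ge0 ltW.
    rewrite hC /Bb.
    have : sq v / c2 * A <= sq v / c2 by rewrite ler_piMr //; case: hA.
    case: hA; case: hB; lra.
  have h3 : Bb / la = 2 * la.
    have -> : Bb = 2 * la ^+ 2 by lra.
    by field; apply: lt0r_neq0.
  lra.
have -> : bsum N (0, 0) (fun b => Order.min (gk b / Z) (gk (b.1 + v.1, b.2 + v.2) / Z)) =
    bsum N (0, 0) (fun b => (2^-1 * u b + 2^-1 * w b) + (- 2^-1) * `|u b - w b|).
  by apply: eq_bsum => b; rewrite min_formula /u /w; ring.
rewrite !bsumD !bsumZl -/A -/B.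
rewrite -/la.
case: hA; case: hB; lra.
Qed.

End Kernel.

Arguments gk {R} D sigma a.
Arguments K {R} D sigma N.
Arguments sq {R} D b.
Arguments c2 {R} sigma.

Lemma min_le_l (R : realType) (a b : R) : Order.min a b <= a.
Proof. by rewrite /Order.min; case: ifPn => //; rewrite -leNgt. Qed.
Lemma min_le_r (R : realType) (a b : R) : Order.min a b <= b.
Proof. by rewrite /Order.min; case: ifPn => // /ltW. Qed.
Lemma min_ge (R : realType) (a b c : R) : c <= a -> c <= b -> c <= Order.min a b.
Proof. by rewrite /Order.min; case: ifPn. Qed.
Lemma min_ge0 (R : realType) (a b : R) : 0 <= a -> 0 <= b -> 0 <= Order.min a b.
Proof. exact: min_ge. Qed.

Lemma min_scale (R : realType) (k a b : R) : 0 <= k -> k * Order.min a b = Order.min (k * a) (k * b).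
Proof.
move=> k0; rewrite !min_formula -mulrBr normrM (ger0_norm k0); ring.
Qed.

Lemma min_sum (R : realType) (I : finType) (g a b : I -> R) : (forall i, 0 <= g i) ->
  \sum_i g i * Order.min (a i) (b i) <= Order.min (\sum_i g i * a i) (\sum_i g i * b i).
Proof.
move=> g0; apply: min_ge; apply: ler_sum => i _; apply: ler_wpM2l => //.
  exact: min_le_l.
exact: min_le_r.
Qed.

Lemma jensen_sqrt (R : realType) (I : finType) (g z : I -> R) (c : R) :
  (forall i, 0 <= g i) -> \sum_i g i = 1 -> 0 < c -> (forall i, c <= z i) ->
  \sum_i g i * Num.sqrt (z i) <= Num.sqrt (\sum_i g i * z i).
Proof.
move=> g0 g1 c0 zc.
set S := \sum_i g i * z i.
have Sc : c <= S.
  rewrite -[c]mul1r -g1 mulr_suml; apply: ler_sum => i _.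
  by apply: ler_wpM2l.
set t := Num.sqrt S.
have t0 : 0 < t by rewrite /t sqrtr_gt0; lra.
have t2 : t ^+ 2 = S by rewrite /t sqr_sqrtr //; lra.
have pt : forall i, g i * Num.sqrt (z i) <= g i * (z i / (2 * t) + t / 2).
  move=> i; apply: ler_wpM2l => //.
  have zi0 : 0 <= z i by apply: le_trans (zc i); exact: ltW.
  have sz := sqr_sqrtr zi0; have sz0 := sqrtr_ge0 (z i).
  set r := Num.sqrt (z i) in sz sz0 *.
  have : 0 <= (r - t) ^+ 2 by apply: sqr_ge0.
  rewrite -sz => h.
  have -> : r ^+ 2 / (2 * t) + t / 2 = (r ^+ 2 + t ^+ 2) / (2 * t).
    by field; apply: lt0r_neq0.
  rewrite ler_pdivlMr ?mulr_gt0 //; nra.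
apply: le_trans (ler_sum _ (fun i _ => pt i)) _.
have -> : \sum_i g i * (z i / (2 * t) + t / 2) = S / (2 * t) + (\sum_i g i) * (t / 2).
  rewrite /S !mulr_suml -big_split /=; apply: eq_bigr => i _; ring.
rewrite g1 mul1r -t2.
have -> : t ^+ 2 / (2 * t) + t / 2 = t by field; apply: lt0r_neq0.
by [].
Qed.

Section Main.
Variables (R : realType) (D : nat) (sigma : R) (p q : {ffun gidx D -> R}).
Hypotheses (D0 : (0 < D)%N) (s0 : 0 < sigma).

Definition ix (x : gidx D) : int * int := ((nat_of_ord x.1)%:Z, (nat_of_ord x.2)%:Z).
Definition Hx (x : gidx D) (a : int * int) : R :=
  gk D sigma (a.1 - (ix x).1, a.2 - (ix x).2) / Zconst D sigma.

Lemma Hx_ge0 x a : 0 <= Hx x a.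
Proof.
have Z0 : 0 < Zconst D sigma := lt_le_trans ltr01 (@Z_ge1 R D sigma D0 s0).
by rewrite /Hx divr_ge0 // ltW // gk_gt0.
Qed.

Lemma Ht_eq (r : {ffun gidx D -> R}) a : Htilde sigma r a = \sum_x Hx x a * r x.
Proof.
apply: eq_bigr => x _; rewrite /Hx sqd_shift /gk /ix /=; ring.
Qed.

Lemma Ht_ge0 (r : {ffun gidx D -> R}) a : is_distr r -> 0 <= Htilde sigma r a.
Proof.
move=> [r0 _]; rewrite Ht_eq; apply: sumr_ge0 => x _; apply: mulr_ge0 => //.
exact: Hx_ge0.
Qed.

Lemma Hp_dec (g : {ffun gidx D * gidx D -> R}) a : is_coupling p q g ->
  Htilde sigma p a = \sum_xy g xy * Hx xy.1 a.
Proof.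
move=> [_ [gp _]]; rewrite Ht_eq.
under eq_bigr do rewrite -gp mulr_sumr.
rewrite pair_bigA /=; apply: eq_bigr => xy _; rewrite mulrC.
by case: xy.
Qed.

Lemma Hq_dec (g : {ffun gidx D * gidx D -> R}) a : is_coupling p q g ->
  Htilde sigma q a = \sum_xy g xy * Hx xy.2 a.
Proof.
move=> [_ [_ gq]]; rewrite Ht_eq.
under eq_bigr do rewrite -gq mulr_sumr.
rewrite exchange_big pair_bigA /=; apply: eq_bigr => xy _; rewrite mulrC.
by case: xy.
Qed.

Definition vv (x y : gidx D) : int * int := ((ix x).1 - (ix y).1, (ix x).2 - (ix y).2).

Lemma pair_big_bound M e (x y : gidx D) : 0 < e -> Zconst D sigma - e <= K D sigma M ->
  1 - e - Num.sqrt ((sq D (vv x y) / c2 sigma + e) / 2) <=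
  bsum (M + D + D) (0, 0) (fun a => Order.min (Hx x a) (Hx y a)).
Proof.
move=> e0 hM.
have F0 : forall a, 0 <= Order.min (Hx x a) (Hx y a).
  by move=> a; apply: min_ge0; apply: Hx_ge0.
apply: le_trans (_ : _ <= bsum (M + D) (ix x) (fun a => Order.min (Hx x a) (Hx y a))) _.
  rewrite bsum_shift.
  have -> : bsum (M + D) (0, 0) (fun b => Order.min (Hx x ((ix x).1 + b.1, (ix x).2 + b.2))
                                    (Hx y ((ix x).1 + b.1, (ix x).2 + b.2))) =
     bsum (M + D) (0, 0) (fun b => Order.min (gk D sigma b / Zconst D sigma)
                                 (gk D sigma (b.1 + (vv x y).1, b.2 + (vv x y).2) / Zconst D sigma)).
    apply: eq_bsum => [[b1 b2]]; rewrite /Hx /vv /=.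
    by congr (Order.min (gk D sigma _ / _) (gk D sigma _ / _)); congr pair; ring.
  apply: (@pair_bound R D sigma D0 s0 M) => //; rewrite /vv /ix /=; move: (ltn_ord x.1) (ltn_ord x.2) (ltn_ord y.1) (ltn_ord y.2) => ? ? ? ?; apply/andP; split; lia.
rewrite -lee_fin !bsum_esum //; apply: esum_sub; last by move=> a _; rewrite lee_fin.
apply: box_sub; rewrite /ix /=; move: (ltn_ord x.1) (ltn_ord x.2) => ? ?; lia.
Qed.

Lemma sq_le_abs (t : R) : -1 <= t <= 1 -> t ^+ 2 <= `|t|.
Proof.
move=> /andP[h1 h2]; case: (lerP 0 t) => t0.
  rewrite ger0_norm //; nra.
rewrite ltr0_norm //; nra.
Qed.

Lemma coord_bd (i j : 'I_D) : (-1 : R) <= (nat_of_ord i)%:R / D%:R - (nat_of_ord j)%:R / D%:R <= (1 : R).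
Proof.
have Dp : (0 : R) < D%:R by rewrite ltr0n.
have hi : (nat_of_ord i)%:R / D%:R < (1 : R).
  by rewrite ltr_pdivrMr // mul1r ltr_nat ltn_ord.
have hj : (nat_of_ord j)%:R / D%:R < (1 : R).
  by rewrite ltr_pdivrMr // mul1r ltr_nat ltn_ord.
have hi0 : (0 : R) <= (nat_of_ord i)%:R / D%:R by rewrite divr_ge0 // ltW.
have hj0 : (0 : R) <= (nat_of_ord j)%:R / D%:R by rewrite divr_ge0 // ltW.
apply/andP; split; lra.
Qed.

Lemma sq_le_l1 (x y : gidx D) : sq D (vv x y) <= l1dist (gpt x) (gpt y) :> R.
Proof.
rewrite /sq /sqdist /l1dist /lpt /gpt /vv /ix /= !subr0 !intrB -!pmulrn !mulrBl.
by apply: lerD; apply: sq_le_abs; apply: coord_bd.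
Qed.

Lemma g_sum1 (g : {ffun gidx D * gidx D -> R}) : is_distr p -> is_coupling p q g ->
  \sum_xy g xy = 1.
Proof.
move=> [_ p1] [_ [gp _]]; rewrite -p1.
under [RHS]eq_bigr do rewrite -gp.
by rewrite pair_bigA; apply: eq_bigr => [[x y]] _.
Qed.

Lemma coupling_bound (g : {ffun gidx D * gidx D -> R}) e :
  is_distr p -> is_distr q -> is_coupling p q g -> 0 < e ->
  ((1 - e - Num.sqrt ((coupling_cost g / c2 sigma + e) / 2))%:E <=
     SIM (Htilde sigma p) (Htilde sigma q))%E.
Proof.
move=> hp hq hg e0.
have [M hM] := @K_approx R D sigma D0 s0 e e0.
set Big := (M + D + D)%N.
set F := fun a => Order.min (Htilde sigma p a) (Htilde sigma q a).
have F0 : forall a, 0 <= F a by move=> a; apply: min_ge0; apply: Ht_ge0.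
have g0 : forall xy, 0 <= g xy by case: hg.
have c20 : 0 < c2 sigma by rewrite /c2 mulr_gt0 // exprn_gt0.
have step1 : ((bsum Big (0, 0) F)%:E <= SIM (Htilde sigma p) (Htilde sigma q))%E.
  rewrite /SIM bsum_esum //; apply: esum_sub => // a _; rewrite lee_fin.
  exact: F0.
apply: le_trans step1; rewrite lee_fin.
have step2 : bsum Big (0, 0) (fun a => \sum_xy g xy * Order.min (Hx xy.1 a) (Hx xy.2 a))
             <= bsum Big (0, 0) F.
  apply: ler_bsum => a; rewrite /F (Hp_dec _ a hg) (Hq_dec _ a hg); exact: min_sum.
apply: le_trans step2.
have -> : bsum Big (0, 0) (fun a => \sum_xy g xy * Order.min (Hx xy.1 a) (Hx xy.2 a)) =
   \sum_xy g xy * bsum Big (0, 0) (fun a => Order.min (Hx xy.1 a) (Hx xy.2 a)).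
  rewrite /bsum exchange_big /=; apply: eq_bigr => xy _; by rewrite mulr_sumr.
set z := fun xy : gidx D * gidx D => (sq D (vv xy.1 xy.2) / c2 sigma + e) / 2.
have step3 : \sum_xy g xy * (1 - e - Num.sqrt (z xy)) <=
   \sum_xy g xy * bsum Big (0, 0) (fun a => Order.min (Hx xy.1 a) (Hx xy.2 a)).
  apply: ler_sum => xy _; apply: ler_wpM2l => //.
  exact: pair_big_bound.
apply: le_trans step3.
have g1 := g_sum1 _ hp hg.
have -> : \sum_xy g xy * (1 - e - Num.sqrt (z xy)) =
    (\sum_xy g xy) * (1 - e) - \sum_xy g xy * Num.sqrt (z xy).
  rewrite mulr_suml -sumrB; apply: eq_bigr => xy _; ring.
rewrite g1 mul1r.
have hz : forall xy, e / 2 <= z xy.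
  move=> xy; rewrite /z; apply: ler_wpM2r; first by rewrite invr_ge0.
  by rewrite lerDr divr_ge0 ?sq_ge0 // ltW.
have J := @jensen_sqrt R _ g z (e / 2) g0 g1 (divr_gt0 e0 (ltr0Sn _ 1)) hz.
have hsum : \sum_xy g xy * z xy <= (coupling_cost g / c2 sigma + e) / 2.
  have -> : (coupling_cost g / c2 sigma + e) / 2 =
      \sum_xy g xy * ((l1dist (gpt xy.1) (gpt xy.2) / c2 sigma + e) / 2).
    rewrite -[e in LHS]mul1r -g1 /coupling_cost !mulr_suml -big_split /= mulr_suml.
    apply: eq_bigr => xy _; ring.
  apply: ler_sum => xy _; apply: ler_wpM2l => //; rewrite /z.
  apply: ler_wpM2r; first by rewrite invr_ge0.
  rewrite lerD2r; apply: ler_wpM2r; first by rewrite invr_ge0 ltW.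
  by case: xy => x y; apply: sq_le_l1.
have := ler_wsqrtr hsum.
move: J; lra.
Qed.

End Main.

Theorem corollary3 (R : realType) (D : nat) (p q : {ffun gidx D -> R}) (sigma : R) :
  is_distr p -> is_distr q -> 0 < sigma ->
  ((1 - Num.sqrt (EMD p q) / (2 * sigma))%:E <=
     SIM (Htilde sigma p) (Htilde sigma q))%E.
Proof.
move=> hp hq s0.
have D0 : (0 < D)%N.
  case: hp => _ h; case: (posnP D) => // D0'.
  move: h; rewrite big1; last by move=> [[i hi] j] _; exfalso; move: (hi); rewrite D0'.
  by move/eqP; rewrite eq_sym oner_eq0.
set S := SIM _ _.
have S0 : (0 <= S)%E.
  apply: esum_ge0 => a _; rewrite lee_fin; apply: min_ge0; exact: Ht_ge0.
case: (eqVneq S +oo%E) => [->|Sne]; first by rewrite leey.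
have Sfin : S \is a fin_num by rewrite ge0_fin_numE // lt_neqAle Sne leey.
have bound : forall g e, is_coupling p q g -> 0 < e ->
    1 - e - Num.sqrt ((coupling_cost g / c2 sigma + e) / 2) <= fine S.
  move=> g e hg e0; rewrite -lee_fin fineK //.
  exact: (@coupling_bound R D sigma p q D0 s0 g e hp hq hg e0).
rewrite -(fineK Sfin) lee_fin; set r := fine S in bound *.
pose g0 : {ffun gidx D * gidx D -> R} := [ffun xy => p xy.1 * q xy.2].
have hg0 : is_coupling p q g0.
  case: hp => p0 p1; case: hq => q0 q1.
  split; first by move=> xy; rewrite ffunE mulr_ge0.
  split.
    by move=> x; under eq_bigr do rewrite ffunE /=; rewrite -mulr_sumr q1 mulr1.
  by move=> y; under eq_bigr do rewrite ffunE /=; rewrite -mulr_suml p1 mul1r.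
set Cs := [set c | exists g, is_coupling p q g /\ c = coupling_cost g].
have Cne : Cs !=set0 by exists (coupling_cost g0); exists g0.
have cost0 : forall g, is_coupling p q g -> 0 <= coupling_cost g.
  move=> g [g0' _]; apply: sumr_ge0 => xy _; apply: mulr_ge0 => //.
  by rewrite /l1dist addr_ge0.
have E0 : 0 <= EMD p q.
  apply: lb_le_inf => // c [g [hg ->]]; exact: cost0.
rewrite leNgt; apply/negP => hlt.
set t := 1 - r.
set sE := Num.sqrt (EMD p q) in hlt *.
have sE0 : 0 <= sE := sqrtr_ge0 _.
have sE2 : sE ^+ 2 = EMD p q by rewrite sqr_sqrtr.
have ht : sE < 2 * sigma * t.
  have : sE / (2 * sigma) < t by rewrite /t; lra.
  by rewrite ltr_pdivrMr ?mulr_gt0 // mulrC.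
have t0 : 0 < t.
  have : 0 < 2 * sigma * t by apply: le_lt_trans ht.
  by rewrite pmulr_rgt0 // mulr_gt0.
have c2e : c2 sigma = 2 * sigma ^+ 2 by [].
have c20 : 0 < c2 sigma by rewrite c2e mulr_gt0 // exprn_gt0.
set del := 2 * c2 sigma * t ^+ 2 - EMD p q.
have del0 : 0 < del.
  rewrite /del c2e subr_gt0 -sE2.
  have h2 : sE ^+ 2 < (2 * sigma * t) ^+ 2.
    by rewrite ltrXn2r // ?ltW // mulr_ge0 // ?mulr_ge0 // ltW.
  apply: lt_le_trans h2 _; rewrite le_eqVlt; apply/orP; left; apply/eqP; ring.
set K1 := 2 * c2 sigma * (4 * t + 1).
have K10 : 0 < K1 by rewrite /K1 !mulr_gt0 //; lra.
set e := Order.min (t / 2) (del / K1).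
have e0 : 0 < e by rewrite /e /Order.min; case: ifP => _; rewrite divr_gt0.
have et : e <= t / 2 := min_le_l _ _ _.
have ed : e * K1 <= del.
  have : e <= del / K1 := min_le_r _ _ _.
  by rewrite ler_pdivlMr.
have lb : forall c, Cs c -> 2 * c2 sigma * t ^+ 2 - del / 2 <= c.
  move=> c [g [hg ->]].
  have hb := bound g e hg e0.
  set X := (coupling_cost g / c2 sigma + e) / 2 in hb.
  have X0 : 0 <= X by rewrite /X divr_ge0 // addr_ge0 ?divr_ge0 ?cost0 // ltW.
  have sX := sqr_sqrtr X0; have sX0 := sqrtr_ge0 X.
  set sx := Num.sqrt X in hb sX sX0.
  have h1 : t - e <= sx by rewrite /t; lra.
  have h2 : (t - e) ^+ 2 <= X.
    have te0 : 0 <= t - e by lra.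
    rewrite -sX; nra.
  have h3 : coupling_cost g = c2 sigma * (2 * X - e).
    by rewrite /X; field; apply: lt0r_neq0.
  rewrite h3.
  have h4 : 2 * (t - e) ^+ 2 - e <= 2 * X - e by lra.
  have h5 : c2 sigma * (2 * (t - e) ^+ 2 - e) <= c2 sigma * (2 * X - e).
    by apply: ler_wpM2l => //; exact: ltW.
  apply: le_trans h5.
  have h6 : e * K1 = c2 sigma * e * (8 * t + 2) by rewrite /K1; ring.
  have h7 : c2 sigma * (2 * (t - e) ^+ 2 - e) =
      2 * c2 sigma * t ^+ 2 - c2 sigma * e * (4 * t + 1) + 2 * c2 sigma * e ^+ 2.
    by ring.
  have h8 : 0 <= 2 * c2 sigma * e ^+ 2 by rewrite mulr_ge0 ?sqr_ge0 // mulr_ge0 // ltW.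
  lra.
have := lb_le_inf Cne lb.
move: del0; rewrite /del; lra.
Qed.
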